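(* Fix an integer $d\ge 0$ and for $m\ge 0$ let $$a_m=\sum_{j=0}^{\lfloor (m+2)/2\rfloor} S(j,d,m+2-2j).$$ Then $a_0=d$, $a_1=d+1$, and $a_m=a_{m-1}+a_{m-2}$ for all $m\ge 2$ (so the sequence is $d,\ d+1,\ 2d+1,\ 3d+2,\ 5d+3,\ 8d+5,\dots$).
   Context: Binomial convention: for integers $M,m$, $\binom{M}{m}=\frac{M!}{m!(M-m)!}$ if $0\le m\le M$, and $\binom{M}{m}=0$ otherwise (in particular whenever $M<0$ or $m<0$ or $m>M$). For nonnegative integers $v,d,n$ the hypersolid number is defined by $$S(v,d,n)=\binom{v+n-2}{v-1}+d\binom{v+n-2}{v}.$$ *)

(* Defs.v *)
From mathcomp Require Import all_boot all_order all_algebra.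
Set Implicit Arguments. Unset Strict Implicit. Unset Printing Implicit Defensive.

(* Binomial coefficient with integer arguments:
   binZ M m = M!/(m!(M-m)!) if 0 <= m <= M, and 0 otherwise. *)
Definition binZ (M m : int) : nat :=
  match M, m with
  | Posz M', Posz m' => 'C(M', m')
  | _, _ => 0
  end.

Definition S (v d n : nat) : nat :=
  binZ (v%:Z + n%:Z - 2)%R (v%:Z - 1)%R + d * binZ (v%:Z + n%:Z - 2)%R v%:Z.

(* a_m = sum_{j=0}^{floor((m+2)/2)} S(j, d, m+2-2j)  (m+2-2j >= 0 in range) *)
Definition a_seq (d m : nat) : nat :=
  \sum_(0 <= j < ((m + 2) %/ 2).+1) S j d (m + 2 - 2 * j).

(* Main.v *)
Require Import Defs.
From mathcomp Require Import all_boot all_order all_algebra.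
From Stdlib Require Import Lia.
Import GRing.Theory.

Definition Dsum (m N : nat) : nat := \sum_(0 <= j < N) 'C(m - j, j).
Definition F (m : nat) : nat := Dsum m m.+1.
Definition P (m j : nat) : nat :=
  if j is i.+1 then (if i < m then 'C(m.-1 - i, i) else 0) else 0.

Lemma Dsum_le m N1 N2 : m < 2 * N1 -> N1 <= N2 -> Dsum m N1 = Dsum m N2.
Proof.
move=> H1 H12; rewrite /Dsum [in RHS](@big_cat_nat _ _ _ N1 0 N2) //=.
rewrite [X in addn _ X]big1_seq ?addn0 // => j /andP [_].
rewrite mem_index_iota => /andP [Hj _].
apply: bin_small.
move/leP: Hj => Hj; move/ltP: H1 => H1; apply/ltP; rewrite -!minusE; rewrite -!multE in H1; lia.
Qed.

Lemma Dsum_eq m N1 N2 : m < 2 * N1 -> m < 2 * N2 -> Dsum m N1 = Dsum m N2.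
Proof.
move=> H1 H2; case: (leqP N1 N2) => H; first exact: Dsum_le.
by symmetry; apply: Dsum_le => //; apply: ltnW.
Qed.

Lemma keybin n i : 'C(n.+1 - i, i.+1) = 'C(n - i, i.+1) + 'C(n - i, i).
Proof.
case: (leqP i n) => H; first by rewrite subSn // binS.
have -> : n.+1 - i = 0 by apply/eqP; rewrite subn_eq0.
have -> : n - i = 0 by apply/eqP; rewrite subn_eq0 ltnW.
rewrite !bin0n; case: i H => //.
Qed.

Lemma F_rec n : F n.+2 = F n.+1 + F n.
Proof.
rewrite /F /Dsum big_nat_recl // subn0 bin0.
under eq_bigr => i _ do rewrite subSS keybin.
rewrite big_split /= addnA; congr (_ + _).
- rewrite [RHS]big_nat_recl // subn0 bin0; congr (_ + _).
  rewrite big_nat_recr //= subnS subnn /= bin0n addn0.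
  by apply: eq_bigr => i _; rewrite subSS.
- have := @Dsum_eq n n.+2 n.+1.
  rewrite /Dsum => -> //; apply/ltP; rewrite -multE; lia.
Qed.

Lemma term m j d : j * 2 <= m + 2 -> S j d (m + 2 - 2 * j) = P m j + d * 'C(m - j, j).
Proof.
move=> Hj; rewrite /S.
set n := m + 2 - 2 * j.
have Hn : j + n = m + 2 - j.
  rewrite /n; move/leP: Hj => Hj; rewrite -!plusE -!multE in Hj; rewrite -!plusE -!minusE -!multE; lia.
rewrite -PoszD Hn.
case: (leqP j m) => Hjm.
- have -> : (Posz (m + 2 - j) - 2 = Posz (m - j))%R.
    have -> : m + 2 - j = (m - j) + 2.
      move/leP: Hjm => Hjm; rewrite -!plusE -!minusE; lia.
    by rewrite PoszD addrK.
  case: j Hj n Hn Hjm => [|i] Hj n Hn Hjm; first by [].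
  have -> : (Posz i.+1 - 1 = Posz i)%R by rewrite -addn1 PoszD addrK.
  rewrite /P /= Hjm /=.
  have -> : m - i.+1 = m.-1 - i.
    move/leP: Hjm => Hjm; rewrite -!minusE; lia.
  by [].
- have -> : m - j = 0 by apply/eqP; rewrite subn_eq0 ltnW.
  have Hj1 : 0 < j by apply: leq_ltn_trans Hjm.
  rewrite bin0n eqn0Ngt Hj1 muln0 addn0.
  have -> : P m j = 0.
    clear -Hjm; case: j Hjm => // i Hi; by rewrite /P ltnNge -ltnS Hi.
  have : m + 2 - j <= 1.
    move/leP: Hjm => Hjm; apply/leP; rewrite -!plusE -!minusE; lia.
  move: (m + 2 - j) => k; case: k => [|[|k]] // _. 
  - by change (Posz 0 - 2)%R with (Negz 1); rewrite /= muln0. 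
  - by change (Posz 1 - 2)%R with (Negz 0); rewrite /= muln0.
Qed.

Lemma divbound m : m < 2 * ((m + 2) %/ 2 + 1).
Proof.
have E := divn_eq (m + 2) 2; have L := ltn_pmod (m + 2) (isT : 0 < 2).
move: E L; set q := (m + 2) %/ 2; set r := (m + 2) %% 2 => E L.
apply/ltP; move/ltP: L => L; rewrite -!plusE -!multE in E *; lia.
Qed.

Lemma a_form d m : a_seq d m = \sum_(0 <= j < (m + 2) %/ 2 + 1) P m j + d * F m.
Proof.
rewrite /a_seq addn1 big_mkord.
rewrite (eq_bigr (fun j : 'I__ => P m j + d * 'C(m - j, j))); last first.
  move=> [j Hj] _ /=; apply: term.
  by rewrite -leq_divRL // -ltnS.
rewrite big_split /= -big_distrr /=; congr (_ + d * _); first by rewrite big_mkord.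
rewrite /F -(@Dsum_eq m ((m+2)%/2).+1 m.+1) //.
- by rewrite /Dsum big_mkord.
- by have := divbound m; rewrite addn1.
- by apply/ltP; rewrite -multE; lia.
Qed.

Lemma Psum_eq m : \sum_(0 <= j < (m + 2) %/ 2 + 1) P m j = if m is k.+1 then F k else 0.
Proof.
case: m => [|k].
  by rewrite big1_seq // => [[|i]] //.
rewrite addn1 big_nat_recl //= add0n.
rewrite (eq_bigr (fun i => 'C(k - i, i))); last first.
  move=> i _; rewrite /P /=; case: ifP => // /negbT; rewrite -leqNgt => H.
  have -> : k - i = 0 by apply/eqP; rewrite subn_eq0 ltnW.
  by rewrite bin0n; case: i H.
rewrite /F; apply: Dsum_eq => //.
have E := divn_eq (k.+1 + 2) 2; have L := ltn_pmod (k.+1 + 2) (isT : 0 < 2).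
move: E L; set q := (k.+1 + 2) %/ 2; set r := (k.+1 + 2) %% 2 => E L.
apply/ltP; move/ltP: L => L; rewrite -!plusE -!multE in E *; lia.
by apply/ltP; rewrite -multE; lia.
Qed.

Lemma a_val d m : a_seq d m = (if m is k.+1 then F k else 0) + d * F m.
Proof. by rewrite a_form Psum_eq. Qed.

Theorem corollary5 (d : nat) :
  a_seq d 0 = d /\ a_seq d 1 = d + 1 /\
  (forall m : nat, 2 <= m -> a_seq d m = a_seq d (m - 1) + a_seq d (m - 2)).
Proof.
have F0 : F 0 = 1 by rewrite /F /Dsum big_nat1.
have F1 : F 1 = 1 by rewrite /F /Dsum big_nat_recr //= big_nat1.
split; first by rewrite a_val /= F0 add0n muln1.
split; first by rewrite a_val /= F0 F1 muln1 addnC.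
case=> [|[|k]] // _.
rewrite subn1 subn2 /= !a_val.
case: k => [|j].
  by rewrite F0 F1 F_rec F1 F0 add0n mulnDr !addnA; congr (_ + _); rewrite addnAC.
rewrite (F_rec j) (F_rec j.+1) mulnDr.
rewrite -!addnA; congr (_ + _); rewrite addnCA; congr (_ + _).
congr (d * _); exact: F_rec.
Qed.
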